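(* Let $\Sigma$ be a $(\mathbf d,\mathbf z)$-cluster pattern with principal coefficients. Then every $y$-variable $y^t_i\in\mathrm{Trop}(\mathbf y,\mathbf z)$ of $\Sigma$ is a Laurent monomial in $y_1,\dots,y_n$ alone (with coefficient $1$), i.e. none of the variables $z_{i,s}$ occurs in it.
   Context: $[a]_+=\max(a,0)$. Mutation data: positive integers $\mathbf d=(d_1,\dots,d_n)$ and frozen coefficients $z_{i,s}$ ($1\le s\le d_i-1$) with $z_{i,s}=z_{i,d_i-s}$, $z_{i,0}=z_{i,d_i}=1$. Regard $y_1,\dots,y_n$ and the $z_{i,s}$ as formal variables; $\mathrm{Trop}(\mathbf y,\mathbf z)$ is the free abelian multiplicative group they generate with $\oplus$ given by componentwise minimum of exponents. The $(\mathbf d,\mathbf z)$-mutation at $k$ acts on a skew-symmetrizable exchange matrix $B=(b_{ij})$ and $y$-variables by: $b'_{ij}=-b_{ij}$ if $i=k$ or $j=k$, else $b'_{ij}=b_{ij}+d_k([-b_{ik}]_+b_{kj}+b_{ik}[b_{kj}]_+)$; $y'_k=y_k^{-1}$, $y'_i=y_i(y_k^{[\varepsilon b_{ki}]_+})^{d_k}(\bigoplus_{s=0}^{d_k}z_{k,s}y_k^{\varepsilon s})^{-b_{ki}}$ ($i\neq k$), $\varepsilon\in\{\pm1\}$ (cluster variables also mutate, irrelevant here). $\mathbb T_n$ is the $n$-regular tree with edges labeled $1,\dots,n$, distinct labels at each vertex. A $(\mathbf d,\mathbf z)$-cluster pattern with principal coefficients assigns to each vertex $t$ a seed $(\mathbf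 x_t,\mathbf y_t,B_t)$, $\mathbf y_t=(y^t_1,\dots,y^t_n)\in\mathrm{Trop}(\mathbf y,\mathbf z)^n$, such that seeds at vertices joined by an edge labeled $k$ are related by the mutation at $k$, and the seed at a fixed initial vertex $t_0$ has $y$-variables the generators $y_1,\dots,y_n$ (initial cluster and skew-symmetrizable $B$ arbitrary). *)

(* Defs.v *)
From HB Require Import structures.
From mathcomp Require Import all_boot all_order all_algebra.
Set Implicit Arguments. Unset Strict Implicit. Unset Printing Implicit Defensive.
Import Order.TTheory GRing.Theory Num.Theory.
Local Open Scope ring_scope.

Definition pos_part (a : int) : int := Num.max a 0.

(* Elements of Trop(y, z): Laurent monomials in the y_j and z_{j,s}, encoded by
   their exponent vectors.  [ye j] is the exponent of y_j; [ze j s] is the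
   exponent of the generator z_{j,s} where s is the canonical representative
   min(s, d_j - s) of the pair {s, d_j - s} (1 <= s <= d_j - 1), reflecting the
   identification z_{j,s} = z_{j,d_j-s}.  Other entries are never touched. *)
Record TropE (n : nat) := MkTrop { ye : 'I_n -> int; ze : 'I_n -> nat -> int }.

Section Trop.
Variable n : nat.
Implicit Types a b : TropE n.

Definition tmul a b : TropE n :=
  MkTrop (fun j => ye a j + ye b j) (fun j s => ze a j s + ze b j s).
Definition tpow a (m : int) : TropE n :=
  MkTrop (fun j => ye a j * m) (fun j s => ze a j s * m).
Definition tinv a : TropE n := tpow a (-1).
Definition tone : TropE n := MkTrop (fun _ => 0) (fun _ _ => 0).
Definition toplus a b : TropE n :=
  MkTrop (fun j => Num.min (ye a j) (ye b j)) (fun j s => Num.min (ze a j s) (ze b j s)).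
Definition tbigoplus (m : nat) (f : nat -> TropE n) : TropE n :=
  foldl (fun acc s => toplus acc (f s)) (f 0%N) (iota 1 m).

Definition ygen (j : 'I_n) : TropE n :=
  MkTrop (fun i => if i == j then 1 else 0) (fun _ _ => 0).
Definition zgen (d : 'I_n -> nat) (j : 'I_n) (s : nat) : TropE n :=
  if (0 < s < d j)%N then
    MkTrop (fun _ => 0)
      (fun i t => if (i == j) && (t == minn s (d j - s)) then 1 else 0)
  else tone.
End Trop.

(* Seeds (cluster variables omitted: they play no role here) *)
Record Seed (n : nat) := MkSeed { Yv : 'I_n -> TropE n; Bm : 'M[int]_n }.

Definition skew_symmetrizable n (B : 'M[int]_n) : Prop :=
  exists r : 'I_n -> nat, (forall i, 0 < r i)%N /\
    forall i j, (r i)%:Z * B i j = - ((r j)%:Z * B j i).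

Definition mutB n (d : 'I_n -> nat) (k : 'I_n) (B : 'M[int]_n) : 'M[int]_n :=
  \matrix_(i, j)
    if (i == k) || (j == k) then - B i j
    else B i j + (d k)%:Z * (pos_part (- B i k) * B k j + B i k * pos_part (B k j)).

Definition mutY n (d : 'I_n -> nat) (k : 'I_n) (eps : int) (B : 'M[int]_n)
    (Y : 'I_n -> TropE n) : 'I_n -> TropE n :=
  fun i =>
    if i == k then tinv (Y k)
    else tmul (tmul (Y i) (tpow (tpow (Y k) (pos_part (eps * B k i))) (d k)%:Z))
              (tpow (tbigoplus (d k) (fun s => tmul (zgen d k s) (tpow (Y k) (eps * s%:Z))))
                    (- B k i)).

Definition mutate n (d : 'I_n -> nat) (k : 'I_n) (eps : int) (S : Seed n) : Seed n :=
  MkSeed (mutY d k eps (Bm S) (Yv S)) (mutB d k (Bm S)).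

Definition mut_related n (d : 'I_n -> nat) (k : 'I_n) (S S' : Seed n) : Prop :=
  exists eps : int, (eps = 1 \/ eps = -1) /\ S' = mutate d k eps S.

(* The n-regular tree T_n: vertices are reduced words in the labels 'I_n (no two
   consecutive equal letters), the empty word is the initial vertex t0, and the
   edge labelled k joins w and rcons w k whenever the latter is reduced. *)
Definition reduced n (w : seq 'I_n) : bool := sorted (fun a b => a != b) w.

Definition is_principal_pattern n (d : 'I_n -> nat) (Sig : seq 'I_n -> Seed n) : Prop :=
  Yv (Sig [::]) = @ygen n /\ skew_symmetrizable (Bm (Sig [::])) /\
  forall (w : seq 'I_n) (k : 'I_n), reduced (rcons w k) ->
    mut_related d k (Sig w) (Sig (rcons w k)) /\
    mut_related d k (Sig (rcons w k)) (Sig w).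

(* Main.v *)
Require Import Defs.
From mathcomp Require Import all_boot all_order all_algebra.
Import Order.TTheory GRing.Theory Num.Theory.
Local Open Scope ring_scope.

Lemma reduced_rcons n (w : seq 'I_n) k : reduced (rcons w k) -> reduced w.
Proof.
case: w => [|x p] //=; rewrite /reduced /= rcons_path => /andP[] //.
Qed.

Lemma foldl_oplus0 n (j : 'I_n) (s : nat) (f : nat -> TropE n) (l : seq nat) acc :
  ze acc j s = 0 -> (forall t, 0 <= ze (f t) j s) ->
  ze (foldl (fun acc s => toplus acc (f s)) acc l) j s = 0.
Proof.
elim: l acc => [|a l IH] acc //= H0 Hf.
apply: IH => //=; rewrite H0.
by apply/eqP; rewrite eq_le ge_min lexx /= le_min lexx Hf.
Qed.

Theorem mainTheorem5 (n : nat) (d : 'I_n -> nat) (Sig : seq 'I_n -> Seed n) :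
  (forall i, (0 < d i)%N) ->
  is_principal_pattern d Sig ->
  forall (w : seq 'I_n), reduced w ->
  forall (i j : 'I_n) (s : nat), ze (Yv (Sig w) i) j s = 0.
Proof.
move=> _ [H0 [_ Hm]] w.
elim/last_ind: w => [|w k IH] Hr i j s.
  by rewrite H0.
have IHw := IH (@reduced_rcons _ _ _ Hr).
have [[eps [_ ->]] _] := Hm w k Hr.
rewrite /= /mutY.
case: (i == k).
  by rewrite /= IHw mul0r.
rewrite /= !IHw !mul0r !add0r.
have -> : ze (tbigoplus (d k)
          (fun s0 => tmul (zgen d k s0) (tpow (Yv (Sig w) k) (eps * s0%:Z)))) j s = 0.
  rewrite /tbigoplus; apply: foldl_oplus0.
    by rewrite /= IHw mul0r addr0 /zgen /=.
  move=> t; rewrite /= IHw mul0r addr0 /zgen.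
  by case: ifP => //= _; case: ifP.
by rewrite mul0r.
Qed.
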